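(* Let $s\ge1$ be an integer, let $(G,Z)$ be a monic selfless plantation with thickness $k$, and let $N$ be the set of vertices of $V(G)\setminus Z$ with a neighbour in $Z$. Suppose that every component of $G\setminus Z$ contains at least two vertices of $N$. Then $|N|\le 4(k\phi(s)+1)|Z|$.
   Context: Graphs are finite and simple. Two subgraphs are anticomplete if their vertex sets are disjoint and no edge joins them. $G$ is $s\mathcal{O}$-free if no $s$ cycles of $G$ are pairwise vertex-disjoint and pairwise anticomplete. $Z\subseteq V(G)$ is cycle-hitting if every cycle of $G$ has a vertex in $Z$. A plantation is a pair $(G,Z)$ with $G$ an $s\mathcal{O}$-free graph and $Z$ cycle-hitting. $(G,Z)$ is monic if $Z$ is stable and each vertex of $N$ has exactly one neighbour in $Z$. A transition is a path of $G\setminus Z$ of length at least one with both ends in $N$ and no internal vertex in $N$; a vertex of $Z$ adjacent to an end of a transition $P$ is a foot of $P$. A self-transition is a transition with only one foot; $(G,Z)$ is selfless if there is none. For $z,z'\in Z$, the multiplicity of $(z,z')$ is the number of transitions whose feet are exactly $z,z'$; the thickness is the maximum multiplicity over pairs of elements of $Z$. $\phi(s)\ge0$ denotes a number (which exists by the Erdős–Pósa theorem) such that every multigraph in which no $s$ cycles are pairwise vertex-disjoint has a set of at most $\phi(s)$ vertices meeting every cycle; in multigraphs, loops and pairs of parallel edges count as cycles. *)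

(* Defs.v *)
From mathcomp Require Import all_boot.
From mathcomp Require Import boolp.

Set Implicit Arguments.
Unset Strict Implicit.
Unset Printing Implicit Defensive.

(* A finite multigraph: vertex type V, edge type E, each edge with a pair of
   (possibly equal) endpoints.  Loops and parallel edges allowed. *)
Section Multigraph.
Variables (V E : finType) (ends : E -> V * V).

Definition mjoins (f : E) (u v : V) : bool :=
  (ends f == (u, v)) || (ends f == (v, u)).

Definition madj (u v : V) : bool := [exists f, mjoins f u v].

(* A cycle of the multigraph, given by its (distinct) vertex sequence:
   a loop, a pair of parallel edges, or an ordinary cycle of length >= 3. *)
Definition mcycle (c : seq V) : bool :=
  uniq c &&
  match c with
  | [::] => false
  | [:: v] => [exists f, ends f == (v, v)]
  | [:: u; v] => [exists f1, exists f2, (f1 != f2) && mjoins f1 u v && mjoins f2 u v]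
  | _ => cycle madj c
  end.
End Multigraph.

(* phi is an admissible value of the Erdos-Posa function at s: every multigraph
   without s pairwise vertex-disjoint cycles has a set of at most phi vertices
   meeting every cycle. *)
Definition erdos_posa_bound (s phi : nat) : Prop :=
  forall (V E : finType) (ends : E -> V * V),
    ~ (exists cs : 'I_s -> seq V,
          (forall i, mcycle ends (cs i)) /\
          (forall i j, i <> j -> [disjoint cs i & cs j])) ->
    exists X : {set V}, #|X| <= phi /\
      (forall c, mcycle ends c -> exists2 x, x \in X & x \in c).

Section Graph.
Variables (T : finType) (e : rel T).

Definition simple_graph : Prop := symmetric e /\ irreflexive e.

Definition gcycle (c : seq T) : bool := uniq c && (2 < size c) && cycle e c.

Definition anticomplete (c1 c2 : seq T) : Prop :=
  forall x y, x \in c1 -> y \in c2 -> x <> y /\ ~~ e x y.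

Definition sO_free (s : nat) : Prop :=
  ~ (exists cs : 'I_s -> seq T,
        (forall i, gcycle (cs i)) /\
        (forall i j, i <> j -> anticomplete (cs i) (cs j))).

Definition cycle_hitting (Z : {set T}) : Prop :=
  forall c, gcycle c -> exists2 z, z \in Z & z \in c.

Definition plantation (s : nat) (Z : {set T}) : Prop :=
  simple_graph /\ sO_free s /\ cycle_hitting Z.

Variable Z : {set T}.

Definition Nset : {set T} := [set v | (v \notin Z) && [exists z in Z, e v z]].

Definition monic : Prop :=
  (forall z z', z \in Z -> z' \in Z -> ~~ e z z') /\
  (forall v, v \in Nset -> #|[set z in Z | e v z]| = 1).

Definition transition (p : seq T) : bool :=
  match p with
  | [::] => false
  | x :: q =>
      (q != [::]) && path e x q && uniq p && all (fun v => v \notin Z) p &&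
      (x \in Nset) && (last x q \in Nset) &&
      all (fun v => v \notin Nset) (behead (belast x q))
  end.

Definition feet (p : seq T) : {set T} :=
  match p with
  | [::] => set0
  | x :: q => [set z in Z | e z x || e z (last x q)]
  end.

Definition selfless : Prop := forall p, transition p -> #|feet p| != 1.

(* edge set of a path; a transition (as a subgraph) is identified by it *)
Definition path_edges (p : seq T) : {set {set T}} :=
  [set E in [seq [set xy.1; xy.2] | xy <- zip p (behead p)]].

Definition multiplicity (z z' : T) : nat :=
  #|[set S : {set {set T}} |
      `[< exists p, [/\ transition p, path_edges p = S & feet p = [set z; z']] >]]|.

Definition thickness : nat :=
  \max_(zz : T * T | (zz.1 \in Z) && (zz.2 \in Z)) multiplicity zz.1 zz.2.

Definition eminusZ : rel T := [rel x y | e x y && (x \notin Z) && (y \notin Z)].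

Definition component (v : T) : {set T} :=
  [set w | (w \notin Z) && connect eminusZ v w].

End Graph.

(* Main.v *)
Require Import Defs.
From mathcomp Require Import all_boot.
From mathcomp Require Import boolp.
From mathcomp Require Import zify.

Set Implicit Arguments.
Unset Strict Implicit.
Unset Printing Implicit Defensive.

Section Generic.
Variables (T : finType) (e : rel T).
Hypothesis esym : symmetric e.

Lemma GL (R' : rel T) x y p :
  (forall u v, R' u v -> e u v) -> x != y -> e x y -> ~~ R' x y ->
  path R' x p -> last x p = y ->
  exists2 c, gcycle e c & {subset c <= x :: p}.
Proof.
move=> sub xy exy nR pp lp.
case: (shortenP pp) lp => p' pp' up' subp' lp'.
exists (x :: p'); last first.
  move=> u; rewrite !inE => /orP[->//|/subp' ->]; by rewrite orbT.
rewrite /gcycle up' /=.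
case: p' pp' up' subp' lp' => [|y1 [|y2 q]].
- by move=> _ _ _ /= lp'; rewrite -lp' eqxx in xy.
- by move=> /= /andP[r _] _ _ lp'; rewrite -lp' r in nR.
move=> pp' _ _ lp'; rewrite /cycle rcons_path.
rewrite (sub_path _ pp'); last by move=> u v /sub.
by rewrite lp' esym exy.
Qed.

Lemma path_connect (R' : rel T) x p y : path R' x p -> y \in x :: p -> connect R' x y.
Proof.
elim: p x => [|x' p IH] x /=.
  by rewrite inE => _ /eqP ->; exact: connect0.
move=> /andP[r pp]; rewrite inE => /orP[/eqP->|yp]; first exact: connect0.
by apply: connect_trans (connect1 r) (IH _ pp yp).
Qed.

End Generic.

Lemma path_tgt (T : Type) (r : rel T) (P : pred T) x p :
  (forall u v, r u v -> P v) -> path r x p -> all P p.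
Proof.
move=> H; elim: p x => [|y p IH] x //= /andP[rxy pp].
by rewrite (H _ _ rxy) (IH _ pp).
Qed.

Section Forest.
Variables (V E : finType) (ends : E -> V * V).

Definition madjA (A : {set E}) : rel V := fun u v => [exists a in A, mjoins ends a u v].
Definition clsA (A : {set E}) (Vs : {set V}) x := [set y in Vs | connect (madjA A) x y].
Definition ncomp A Vs := #|[set clsA A Vs x | x in Vs]|.

Lemma mjoins_sym a u v : mjoins ends a u v = mjoins ends a v u.
Proof. by rewrite /mjoins orbC. Qed.

Lemma madjA_sym A : symmetric (madjA A).
Proof.
move=> u v; rewrite /madjA; apply/existsP/existsP => -[a /andP[aA j]];
  by exists a; rewrite aA mjoins_sym.
Qed.

Lemma madjA_sub (A B : {set E}) (u v : V) : A \subset B -> madjA A u v -> madjA B u v.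
Proof.
move=> /subsetP sAB /existsP[a /andP[aA j]]; apply/existsP; exists a; by rewrite sAB.
Qed.

Lemma madjA_madj (A : {set E}) (u v : V) : madjA A u v -> madj ends u v.
Proof. by move=> /existsP[a /andP[_ j]]; apply/existsP; exists a. Qed.

Lemma forest_count (Vs : {set V}) (A : {set E}) :
  (forall a, a \in A -> ((ends a).1 \in Vs) && ((ends a).2 \in Vs)) ->
  (forall c, mcycle ends c -> {subset c <= Vs} -> False) ->
  #|A| <= #|Vs|.
Proof.
move=> HA Hcyc.
suff S : forall n (B : {set E}), #|B| = n -> B \subset A -> #|B| + ncomp B Vs <= #|Vs|.
  by have := S _ A erefl (subxx A); lia.
elim=> [|n IH] B cB sBA.
  have B0 : B = set0 by apply/eqP; rewrite -cards_eq0 cB.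
  rewrite cB add0n /ncomp card_in_imset // => x y xV yV /setP /(_ y).
  rewrite !inE yV connect0 /= => /connectP[p pp ->].
  case: p pp => [|w p] //= /andP[/existsP[a]]; by rewrite B0 inE.
have : 0 < #|B| by rewrite cB.
case/card_gt0P => a aB.
set B' := B :\ a.
have cB' : #|B'| = n by move: cB; rewrite (cardsD1 a) aB add1n => -[].
have sB'A : B' \subset A by apply: subset_trans sBA; exact: subsetDl.
have := IH _ cB' sB'A.
suff: ncomp B Vs < ncomp B' Vs by rewrite cB -cB'; lia.
have aA : a \in A by apply: (subsetP sBA).
case/andP: (HA _ aA); case E0 : (ends a) => [u v] /= uV vV.
have jauv : mjoins ends a u v by rewrite /mjoins E0 eqxx.
have nc : ~~ connect (madjA B') u v.
  apply/negP => /connectP[p pp lp].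
  case: (eqVneq u v) => [uv|uv].
    apply: (Hcyc [:: u]); last by move=> x; rewrite inE => /eqP ->.
    rewrite /mcycle /=; apply/existsP; exists a; by rewrite E0 uv.
  case: (shortenP pp) lp => p' pp' up' subp' lp'.
  have p'V : {subset p' <= Vs}.
    apply/allP; apply: path_tgt pp' => x y /existsP[a' /andP[a'B]].
    have /andP[h1 h2] := HA _ (subsetP sB'A _ a'B).
    by rewrite /mjoins => /orP[]/eqP E1; rewrite E1 /= in h1 h2.
  case: p' pp' up' subp' lp' p'V => [|w1 [|w2 q]].
  - by move=> _ _ _ /= vu; rewrite vu eqxx in uv.
  - move=> /= /andP[/existsP[a' /andP[a'B j']] _] _ _ wv _; subst w1.
    apply: (Hcyc [:: u; v]); last by move=> x; rewrite !inE => /orP[]/eqP->.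
    rewrite /mcycle /= inE uv /=.
    apply/existsP; exists a; apply/existsP; exists a'.
    apply/andP; split; last exact: j'; apply/andP; split; last exact: jauv.
    by apply/eqP => aa; move: a'B; rewrite -aa !inE eqxx.
  move=> pp' up' _ lp' p'V.
  apply: (Hcyc [:: u, w1, w2 & q]); last first.
    by move=> x; rewrite inE => /orP[/eqP->//|/p'V].
  change (uniq [:: u, w1, w2 & q] && cycle (madj ends) [:: u, w1, w2 & q]).
  rewrite up' /cycle rcons_path (sub_path (@madjA_madj B') pp') /=.
  rewrite /= in lp'; apply/existsP; exists a; by rewrite -lp' mjoins_sym jauv.
have sym := madjA_sym B.
have symc : connect_sym (madjA B) := sym_connect_sym sym.
have subB' : B' \subset B by exact: subsetDl.
have cBuv : connect (madjA B) u v.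
  apply: connect1; apply/existsP; exists a; by rewrite aB jauv.
pose h (C : {set V}) := [set y in Vs | [exists x in C, connect (madjA B) x y]].
have hc : forall x, x \in Vs -> h (clsA B' Vs x) = clsA B Vs x.
  move=> x xV; apply/setP => y; rewrite !inE; case: (y \in Vs) => //=.
  apply/existsP/idP => [[x' /andP[]]|cxy].
    rewrite inE => /andP[_ cxx'] cx'y; apply: connect_trans cx'y.
    apply: connect_sub cxx' => s t st; apply: connect1; exact: madjA_sub st.
  by exists x; rewrite inE xV connect0 cxy.
set K := [set clsA B' Vs x | x in Vs].
have eK : [set clsA B Vs x | x in Vs] = h @: K.
  rewrite -imset_comp; apply: eq_in_imset => x xV /=; by rewrite hc.
rewrite /ncomp eK -/K.
set Cu := clsA B' Vs u; set Cv := clsA B' Vs v.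
have CuK : Cu \in K by apply/imsetP; exists u.
have CvK : Cv \in K by apply/imsetP; exists v.
have Cuv : Cu != Cv.
  apply/eqP => /setP /(_ v); rewrite !inE vV connect0 /=; by move/negbTE: nc => ->.
have hK : h @: K = h @: (K :\ Cv).
  apply/eqP; rewrite eqEsubset; apply/andP; split; last by apply: imsetS; exact: subsetDl.
  apply/subsetP => C /imsetP[C' C'K ->].
  case: (eqVneq C' Cv) => [->|C'v].
    apply/imsetP; exists Cu; first by rewrite !inE Cuv CuK.
    rewrite /Cu /Cv !hc //; apply/setP => y; rewrite !inE.
    case: (y \in Vs) => //=; apply/idP/idP => H.
      exact: connect_trans cBuv H.
    by apply: connect_trans H; rewrite symc.
  apply/imsetP; exists C' => //; by rewrite !inE C'v C'K.
rewrite hK; apply: leq_ltn_trans (leq_imset_card _ _) _.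
by rewrite (cardsD1 Cv K) CvK add1n ltnSn.
Qed.

End Forest.

Section Main.
Variables (T : finType) (e : rel T) (Z : {set T}).
Hypotheses (esym : symmetric e) (eirr : irreflexive e) (Hhit : cycle_hitting e Z)
  (Hstab : forall z z', z \in Z -> z' \in Z -> ~~ e z z')
  (Hmon : forall v, v \in Nset e Z -> #|[set z in Z | e v z]| = 1)
  (Hself : selfless e Z)
  (Hcomp : forall v, v \notin Z -> 2 <= #|component e Z v :&: Nset e Z|).

Local Notation N := (Nset e Z).
Local Notation R := (eminusZ e Z).

Definition foot v := odflt v [pick z in Z | e v z].

Lemma inN v : (v \in N) = (v \notin Z) && [exists z in Z, e v z].
Proof. by rewrite inE. Qed.

Lemma N_notZ v : v \in N -> v \notin Z.
Proof. by rewrite inN => /andP[]. Qed.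

Lemma foot_spec v : v \in N -> (foot v \in Z) && e v (foot v).
Proof.
rewrite inN => /andP[_ /existsP[z /andP[zZ evz]]].
rewrite /foot; case: pickP => [z' /andP[-> ->] //|/(_ z)].
by rewrite zZ evz.
Qed.

Lemma footZ v : v \in N -> foot v \in Z.
Proof. by move/foot_spec/andP=>[]. Qed.
Lemma foot_e v : v \in N -> e v (foot v).
Proof. by move/foot_spec/andP=>[]. Qed.

Lemma foot_uniq v z : v \in N -> z \in Z -> e v z -> z = foot v.
Proof.
move=> vN zZ evz; have := Hmon vN; move/eqP/cards1P => [z0 H].
have: z \in [set z in Z | e v z] by rewrite inE zZ evz.
have: foot v \in [set z in Z | e v z] by rewrite inE footZ // foot_e.
by rewrite H !inE => /eqP -> /eqP ->.
Qed.

Lemma N_of v z : v \notin Z -> z \in Z -> e v z -> v \in N.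
Proof. move=> vZ zZ evz; rewrite inN vZ; apply/existsP; exists z; by rewrite zZ. Qed.

Lemma Rsym : symmetric R.
Proof. move=> u v; rewrite /eminusZ /= esym; by rewrite andbAC. Qed.

Lemma R_e u v : R u v -> e u v.
Proof. by rewrite /eminusZ /= => /andP[/andP[]]. Qed.

Lemma R_notZ u v : R u v -> (u \notin Z) && (v \notin Z).
Proof. by rewrite /eminusZ /= => /andP[/andP[_ ->] ->]. Qed.

Lemma connect_notZ x y : x \notin Z -> connect R x y -> y \notin Z.
Proof.
move=> xZ /connectP[p pp ->].
case: p pp => [|a p] // pp.
have := path_tgt (P := fun v => v \notin Z) _ pp.
move/(_ (fun u v H => proj2 (andP (R_notZ H)))) => /allP; apply.
by rewrite /= mem_last.
Qed.

Lemma connectRsym : connect_sym R.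
Proof. exact: sym_connect_sym Rsym. Qed.

Lemma comp_eq x y : x \notin Z -> connect R x y -> component e Z x = component e Z y.
Proof.
move=> xZ cxy; apply/setP => w; rewrite !inE.
case: (w \in Z) => //=; apply/idP/idP => H.
- by apply: connect_trans H; rewrite connectRsym.
- exact: connect_trans cxy H.
Qed.

Definition root x := odflt x [pick r in component e Z x :&: N].

Lemma root_spec x : x \notin Z -> [/\ root x \in N, root x \notin Z & connect R x (root x)].
Proof.
move=> xZ; have := Hcomp xZ; rewrite /root; case: pickP => [r|].
  move=> /setIP[]; rewrite inE => /andP[rZ cr] rN _; by split.
move=> H; have -> : #|component e Z x :&: N| = 0 by apply: eq_card0 => r; exact: H.
by [].
Qed.

Lemma root_eq x y : x \notin Z -> connect R x y -> root y = root x.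
Proof.
move=> xZ cxy; rewrite /root -(comp_eq xZ cxy); case: pickP => // H.
have := Hcomp xZ.
by have -> : #|component e Z x :&: N| = 0 by apply: eq_card0 => r; exact: H.
Qed.

Lemma rootN x : x \notin Z -> root x \in N.
Proof. by case/root_spec. Qed.
Lemma root_notZ x : x \notin Z -> root x \notin Z.
Proof. by case/root_spec. Qed.
Lemma root_conn x : x \notin Z -> connect R x (root x).
Proof. by case/root_spec. Qed.
Lemma root_root x : x \notin Z -> root (root x) = root x.
Proof. move=> xZ; exact: root_eq xZ (root_conn xZ). Qed.

Definition distP x n := ~~ connect R (root x) x ||
  [exists t : n.-tuple T, path R (root x) t && (last (root x) t == x)].

Lemma dist_ex x : exists n, distP x n.
Proof.
rewrite /distP; case: (boolP (connect R (root x) x)) => [/connectP[p pp lp]|]; last by exists 0.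
exists (size p); apply/existsP; exists (in_tuple p); by rewrite /= pp -lp eqxx.
Qed.

Definition dist x := ex_minn (dist_ex x).

Lemma dist_min x p : x \notin Z -> path R (root x) p -> last (root x) p = x -> dist x <= size p.
Proof.
move=> xZ pp lp; rewrite /dist; case: ex_minnP => n _ min; apply: min.
rewrite /distP; apply/orP; right; apply/existsP; exists (in_tuple p); by rewrite /= pp lp eqxx.
Qed.

Lemma dist_path x : x \notin Z ->
  exists2 p, path R (root x) p & (last (root x) p = x /\ size p = dist x).
Proof.
move=> xZ; rewrite /dist; case: ex_minnP => n; rewrite /distP.
have -> : connect R (root x) x by rewrite connectRsym root_conn.
move=> /= /existsP[t /andP[pt /eqP lt]] _; exists t => //; by rewrite size_tuple.
Qed.

Lemma dist0 x : x \notin Z -> dist x = 0 -> x = root x.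
Proof.
move=> xZ d0; case: (dist_path xZ) => p _ []; rewrite d0 => lp /size0nil pnil.
by move: lp; rewrite pnil.
Qed.

Lemma dist_root x : x \notin Z -> dist (root x) = 0.
Proof.
move=> xZ; apply/eqP; rewrite -leqn0.
have := @dist_min (root x) [::] (root_notZ xZ); rewrite root_root //; apply => //.
Qed.

Definition next x := odflt x [pick w | R x w && ((dist w).+1 == dist x)].

Lemma next_spec x : x \notin Z -> x != root x ->
  [/\ R x (next x), (dist (next x)).+1 = dist x, next x \notin Z & root (next x) = root x].
Proof.
move=> xZ xr.
have [w Rxw dw] : exists2 w, R x w & (dist w).+1 = dist x.
  case: (dist_path xZ) => p pp [lp sp].
  case/lastP: p pp lp sp => [|p0 xl]; first by move=> _ /= lp; rewrite lp eqxx in xr.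
  rewrite rcons_path last_rcons size_rcons => /andP[pp0 Rw] lxl sp; subst xl.
  set w := last (root x) p0 in Rw.
  have wZ : w \notin Z by case/andP: (R_notZ Rw).
  have cxw : connect R x w by apply: connect1; rewrite Rsym.
  have rw : root w = root x by apply: root_eq.
  exists w; first by rewrite Rsym.
  apply/eqP; rewrite eqn_leq; apply/andP; split.
    have := dist_min wZ; rewrite rw => /(_ _ pp0 erefl); by rewrite -sp ltnS.
  case: (dist_path wZ) => q; rewrite rw => pq [lq sq].
  have := dist_min xZ (p := rcons q x); rewrite size_rcons sq; apply => //.
    by rewrite rcons_path pq lq.
  by rewrite last_rcons.
have Hnx : R x (next x) /\ (dist (next x)).+1 = dist x.
  rewrite /next; case: pickP => [w' /andP[r /eqP d]|/(_ w)] //.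
  by rewrite Rxw dw eqxx.
case: Hnx => r d.
have nZ : next x \notin Z by case/andP: (R_notZ r).
split => //; apply: root_eq xZ _; exact: connect1.
Qed.

Lemma dist_ind (P : T -> Prop) :
  (forall x, x \notin Z -> (forall y, y \notin Z -> dist y < dist x -> P y) -> P x) ->
  forall x, x \notin Z -> P x.
Proof.
move=> H.
suff: forall n x, dist x <= n -> x \notin Z -> P x by move=> S x; exact: S.
elim=> [|n IH] x dx xZ; apply: H => // y yZ dy.
  by move: dy; rewrite ltnNge (leq_trans dx) .
apply: IH yZ; rewrite -ltnS; exact: leq_trans dy dx.
Qed.

Lemma tree_edge x y : R x y ->
  ((x != root x) && (y == next x)) || ((y != root y) && (x == next y)).
Proof.
move=> Rxy; apply/negPn/negP => H.
case/andP: (R_notZ Rxy) => xZ yZ.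
pose R' := [rel u v | R u v && ~~ (((u == x) && (v == y)) || ((u == y) && (v == x)))].
have R'sym : symmetric R'.
  move=> u v; rewrite /R' /= Rsym.
  by case: (u == x); case: (v == y); case: (u == y); case: (v == x); rewrite ?andbF.
have cxy : connect R x y by exact: connect1.
have ry : root y = root x by apply: root_eq.
have Cr : forall u, u \notin Z -> root u = root x -> connect R' u (root x).
  apply: dist_ind => u uZ IH ru.
  case: (eqVneq u (root u)) => [ur|ur]; first by rewrite -ru -ur connect0.
  case: (next_spec uZ ur) => Rn dn nZ rn.
  apply: connect_trans (IH _ nZ _ _); last by rewrite rn.
    apply: connect1; rewrite /R' /= Rn /=.
    apply/negP => /orP[/andP[/eqP ux /eqP nuy]|/andP[/eqP uy /eqP nux]]; apply: (negP H).
      by subst u; rewrite ur nuy eqxx.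
    by subst u; rewrite ur nux eqxx orbT.
  by rewrite -dn ltnSn.
have cx := Cr x xZ erefl.
have cy := Cr y yZ ry.
have : connect R' x y by apply: connect_trans cx _; rewrite (sym_connect_sym R'sym).
case/connectP => p pp lp.
have xy : x != y by apply/eqP => exy; move: Rxy; rewrite -exy => /R_e; rewrite (eirr x).
case: (@GL T e esym R' x y p) => //.
- by move=> u v /andP[/R_e].
- exact: R_e.
- by rewrite /R' /= !eqxx /= andbF.
move=> c gc sc; case: (Hhit gc) => z zZ zc.
have := sc _ zc; rewrite inE => /orP[/eqP zx|zp]; first by rewrite -zx zZ in xZ.
have := path_tgt (P := fun v => v \notin Z) _ pp.
move/(_ (fun u v H => proj2 (andP (R_notZ (proj1 (andP H)))))) => /allP /(_ _ zp).
by rewrite zZ.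
Qed.


Fixpoint segf n x := if x \in N then [:: x] else
  if n is n'.+1 then x :: segf n' (next x) else [:: x].
Definition seg x := segf (dist x) x.
Definition firstN x := last x (seg x).
Fixpoint cntf n x := (x \in N) + (if n is n'.+1 then cntf n' (next x) else 0).
Definition cnt x := cntf (dist x) x.

Lemma notN_notroot x : x \notin Z -> x \notin N -> x != root x.
Proof. by move=> xZ xN; apply/eqP => xr; move: xN; rewrite xr rootN. Qed.

Lemma seg_N x : x \in N -> seg x = [:: x].
Proof. by rewrite /seg; case: (dist x) => [|n] /= ->. Qed.

Lemma seg_nN x : x \notin Z -> x \notin N -> seg x = x :: seg (next x).
Proof.
move=> xZ xN; case: (next_spec xZ (notN_notroot xZ xN)) => _ d _ _.
by rewrite /seg -d /= (negbTE xN).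
Qed.

Lemma cnt_next x : x \notin Z -> x != root x -> cnt x = (x \in N) + cnt (next x).
Proof.
move=> xZ xr; case: (next_spec xZ xr) => _ d _ _.
by rewrite /cnt -d.
Qed.

Lemma cnt_root x : x \notin Z -> x = root x -> cnt x = 1.
Proof.
move=> xZ xr; rewrite /cnt.
have -> : dist x = 0 by rewrite xr dist_root.
by rewrite /= xr rootN.
Qed.

Lemma seg_head x : exists q, seg x = x :: q.
Proof. by rewrite /seg; case: (dist x) => [|n] /=; case: (x \in N); eexists. Qed.

Lemma seg_props x : x \notin Z ->
  [/\ path R x (behead (seg x)),
      {in seg x, forall y, [/\ y \notin Z, root y = root x & dist y <= dist x]},
      uniq (seg x)
    & firstN x \in N /\ cnt (firstN x) = cnt x] /\
  [/\ {in seg x, forall y, y \in N -> y = firstN x},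
      {in seg x, forall y, y \notin N -> next y \in seg x}
    & {in seg x, forall y, firstN y = firstN x}].
Proof.
elim/dist_ind => {}x xZ IH.
case: (boolP (x \in N)) => xN.
  rewrite /firstN !seg_N //=; split; split => //.
  - by move=> y; rewrite inE => /eqP ->.
  - by move=> y; rewrite inE => /eqP ->.
  - by move=> y; rewrite inE => /eqP ->; rewrite xN.
  - by move=> y; rewrite inE => /eqP ->; rewrite seg_N.
have xr := notN_notroot xZ xN.
case: (next_spec xZ xr) => Rn dn nZ rn.
have dlt : dist (next x) < dist x by rewrite -dn ltnSn.
have [[P1 P2 P3 [P4 P4']] [P5 P6 P7]] := IH _ nZ dlt.
have fx : firstN x = firstN (next x).
  rewrite /firstN (seg_nN xZ xN) /=; by case: (seg_head (next x)) => q ->.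
rewrite /firstN in fx.
have sx := seg_nN xZ xN.
case: (seg_head (next x)) => q sq.
split; split.
- by rewrite sx /= sq /= Rn; move: P1; rewrite sq.
- move=> y; rewrite sx inE => /orP[/eqP ->|ys]; first by split.
  case: (P2 _ ys) => yZ ry dy; split => //; first by rewrite ry rn.
  by apply: leq_trans dy _; rewrite -dn leqnSn.
- rewrite sx /= P3 andbT; apply/negP => /P2 [_ _]; by rewrite -dn ltnNge leqnn.
- rewrite /firstN fx; split => //.
  by rewrite (cnt_next xZ xr) (negbTE xN) add0n.
- move=> y; rewrite sx inE => /orP[/eqP ->|ys]; first by rewrite (negbTE xN).
  by move/(P5 _ ys); rewrite /firstN fx.
- move=> y; rewrite sx inE => /orP[/eqP ->|ys] yN.
    by rewrite sq !inE eqxx orbT.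
  by rewrite inE (P6 _ ys yN) orbT.
- move=> y; rewrite sx inE => /orP[/eqP ->|ys]; first by rewrite /firstN fx.
  by rewrite (P7 _ ys) /firstN fx.
Qed.



Definition par b := firstN (next b).
Definition Ptr b := b :: seg (next b).
Definition nr b := (b \in N) && (b != root b).

Lemma firstN_N x : x \in N -> firstN x = x.
Proof. by move=> xN; rewrite /firstN seg_N. Qed.

Lemma belast_last (x y : T) s : uniq (x :: s) -> y \in belast x s -> y != last x s.
Proof.
move=> u yb; move: u; rewrite lastI rcons_uniq => /andP[nl _].
by apply/eqP => yl; rewrite -yl yb in nl.
Qed.

Section Nr.
Variable b : T.
Hypothesis nrb : nr b.

Let bN : b \in N. Proof. by case/andP: nrb. Qed.
Let bZ : b \notin Z. Proof. exact: N_notZ bN. Qed.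
Let br : b != root b. Proof. by case/andP: nrb. Qed.

Lemma nr_next : [/\ R b (next b), (dist (next b)).+1 = dist b, next b \notin Z & root (next b) = root b].
Proof. exact: next_spec. Qed.

Let nZ : next b \notin Z. Proof. by case: nr_next. Qed.

Lemma parN : par b \in N.
Proof. by case: (seg_props nZ) => [[_ _ _ []]]. Qed.

Lemma cnt_par : cnt b = (cnt (par b)).+1.
Proof.
rewrite (cnt_next bZ br) bN; case: (seg_props nZ) => [[_ _ _ [_ ->]]] _.
by rewrite add1n.
Qed.

Lemma par_neq : par b != b.
Proof. by apply/eqP => pb; have := cnt_par; rewrite pb => /n_Sn. Qed.

Lemma Ptr_mem u : u \in Ptr b ->
  [/\ u \notin Z, root u = root b, (u \in N -> u = b \/ u = par b),
      (u \notin N -> firstN u = par b)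
    & (u != par b -> u != root u /\ next u \in Ptr b)].
Proof.
case: (nr_next) => _ _ _ rn.
case: (seg_props nZ) => [[_ P2 _ _] [P5 P6 P7]].
rewrite inE => /orP[/eqP ->|us].
  split => //; first by move=> _; left.
    by rewrite bN.
  move=> _; split => //; rewrite inE; apply/orP; right.
  by case: (seg_head (next b)) => q ->; rewrite inE eqxx.
case: (P2 _ us) => uZ ru _; split => //.
- by rewrite ru rn.
- by move=> /(P5 _ us) ->; right.
- by move=> _; rewrite (P7 _ us).
move=> up; have uN : u \notin N by apply/negP => /(P5 _ us) ue; rewrite ue eqxx in up.
split; first exact: notN_notroot.
by rewrite inE (P6 _ us uN) orbT.
Qed.

Lemma par_in : par b \in Ptr b.
Proof.
rewrite inE /par /firstN; apply/orP; right.
by case: (seg_head (next b)) => q ->; rewrite /= mem_last.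
Qed.

Lemma b_in : b \in Ptr b.
Proof. by rewrite inE eqxx. Qed.

Lemma Ptr_trans : transition e Z (Ptr b).
Proof.
case: (nr_next) => Rn dn _ rn.
case: (seg_props nZ) => [[P1 P2 P3 [P4 _]] [P5 _ _]].
rewrite /Ptr /transition.
case: (seg_head (next b)) => q sq.
rewrite sq in P1 P2 P3 P5 *.
have lq : last (next b) q = par b by rewrite /par /firstN sq.
have h1 : path e b (next b :: q) by rewrite /= (R_e Rn) (sub_path (@R_e) P1).
have h2 : uniq (b :: next b :: q).
  rewrite cons_uniq P3 andbT; apply/negP => /P2 [_ _]; by rewrite -dn ltnNge leqnn.
have h3 : all (fun v => v \notin Z) (b :: next b :: q).
  apply/allP => u; rewrite inE => /orP[/eqP->//|us]; by case: (P2 _ us).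
have h4 : all (fun v => v \notin N) (behead (belast b (next b :: q))).
  apply/allP => u ub; have us : u \in next b :: q by rewrite (mem_belast ub).
  apply/negP => uN; have := P5 _ us uN; rewrite /firstN sq /= => ul.
  by have := belast_last P3 ub; rewrite -ul eqxx.
change ((next b :: q != [::]) && path e b (next b :: q) && uniq (b :: next b :: q) &&
  all (fun v => v \notin Z) (b :: next b :: q) && (b \in N) && (last b (next b :: q) \in N) &&
  all (fun v => v \notin N) (behead (belast b (next b :: q)))).
by rewrite h1 h2 h3 h4 bN /= lq P4.
Qed.

Lemma Ptr_feet : feet e Z (Ptr b) = [set foot b; foot (par b)].
Proof.
have lq : last b (seg (next b)) = par b.
  by rewrite /par /firstN; case: (seg_head (next b)) => q ->.
rewrite /feet /Ptr lq; apply/setP => z; rewrite !inE.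
have pN := parN.
apply/idP/idP.
- move=> /andP[zZ /orP[ezb|ezp]]; apply/orP; [left|right]; apply/eqP; apply: foot_uniq => //;
  by rewrite esym.
- move=> /orP[/eqP->|/eqP->].
    by rewrite footZ // esym foot_e.
  by rewrite footZ // (esym _ (par b)) foot_e // orbT.
Qed.

Lemma foot_par_neq : foot b != foot (par b).
Proof.
have := Hself Ptr_trans; rewrite Ptr_feet; apply: contra => /eqP ->.
by rewrite setUid cards1.
Qed.

End Nr.

Lemma nr_par b : nr b -> par b != root (par b) -> nr (par b).
Proof. by move=> nrb pr; rewrite /nr parN. Qed.

Section Anti.
Variables b c : T.
Hypotheses (nrb : nr b) (nrc : nr c).
Hypothesis Hd : forall u v, u \in [:: b; par b] -> v \in [:: c; par c] -> foot u != foot v.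
Hypothesis Hmod : root b = root c -> cnt b %% 3 = cnt c %% 3.

Lemma anti_int x : x \in Ptr b -> x \in Ptr c -> False.
Proof.
move=> xb xc.
case: (Ptr_mem nrb xb) => _ _ Nb nNb _.
case: (Ptr_mem nrc xc) => _ _ Nc nNc _.
case: (boolP (x \in N)) => xN.
  have u1 : x \in [:: b; par b] by case: (Nb xN) => ->; rewrite !inE eqxx ?orbT.
  have u2 : x \in [:: c; par c] by case: (Nc xN) => ->; rewrite !inE eqxx ?orbT.
  by have := Hd u1 u2; rewrite eqxx.
have := Hd (u := par b) (v := par c); rewrite !inE !eqxx !orbT => /(_ erefl erefl).
by rewrite -(nNb xN) -(nNc xN) eqxx.
Qed.

Lemma anti_edge x y : x \in Ptr b -> y \in Ptr c -> x != root x -> y = next x -> False.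
Proof.
move=> xb yc xr yn.
case: (eqVneq x (par b)) => [xp|xp]; last first.
  case: (Ptr_mem nrb xb) => _ _ _ _ /(_ xp) [_ nb].
  by apply: (anti_int (x := y)); rewrite // yn.
have nrp : nr (par b) by apply: (nr_par nrb); rewrite -xp.
have cp := cnt_par nrp.
have cb := cnt_par nrb.
have pp : par (par b) = firstN y by rewrite /par -/(par b) -xp -yn.
case: (Ptr_mem nrb xb) => xZ rx _ _ _.
case: (Ptr_mem nrc yc) => _ ry Nc nNc _.
have rxy : root b = root c.
  have : connect R x y.
    by apply: connect1; rewrite yn; case: (next_spec xZ xr).
  move/(root_eq xZ); by rewrite -rx -ry => ->.
have m := Hmod rxy.
have cc := cnt_par nrc.
case: (boolP (y \in N)) => yN.
  rewrite pp firstN_N // in cp.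
  case: (Nc yN) => yc'.
    move: m; rewrite cb cp yc'; lia.
  move: m; rewrite cb cp cc -yc'; lia.
rewrite pp nNc // in cp.
move: m; rewrite cb cp cc; lia.
Qed.

End Anti.

Lemma anti b c x y : nr b -> nr c ->
  (forall u v, u \in [:: b; par b] -> v \in [:: c; par c] -> foot u != foot v) ->
  (root b = root c -> cnt b %% 3 = cnt c %% 3) ->
  x \in Ptr b -> y \in Ptr c -> (x != y) && ~~ e x y.
Proof.
move=> nrb nrc Hd Hm xb yc.
have Hd' : forall u v, u \in [:: c; par c] -> v \in [:: b; par b] -> foot u != foot v.
  by move=> u v uc vb; rewrite eq_sym; apply: Hd.
have Hm' : root c = root b -> cnt c %% 3 = cnt b %% 3 by move=> h; rewrite Hm.
apply/andP; split.
  by apply/eqP => xy; apply: (anti_int nrb nrc Hd (x := x)); rewrite // xy.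
apply/negP => exy.
case: (Ptr_mem nrb xb) => xZ _ _ _ _.
case: (Ptr_mem nrc yc) => yZ _ _ _ _.
have Rxy : R x y by rewrite /eminusZ /= exy xZ yZ.
case/orP: (tree_edge Rxy) => /andP[r /eqP n].
  exact: (anti_edge nrb nrc Hd Hm xb yc r n).
exact: (anti_edge nrc nrb Hd' Hm' yc xb r n).
Qed.



Definition cls r j := [set b in N | (root b == r) && (b != r) && (cnt b %% 3 == j)].
Definition J r :=
  let c0 := #|cls r 0| in let c1 := #|cls r 1| in let c2 := #|cls r 2| in
  if (c1 <= c0) && (c2 <= c0) then 0 else if c2 <= c1 then 1 else 2.

Lemma J_max r : [/\ #|cls r 0| <= #|cls r (J r)|, #|cls r 1| <= #|cls r (J r)|
   & #|cls r 2| <= #|cls r (J r)|].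
Proof.
rewrite /J; case: ifP => [/andP[h1 h2]|/negbT]; first by rewrite leqnn h1 h2.
case: ifP => [h|/negbT]; rewrite negb_and -!ltnNge.
  move=> /orP[h'|h']; split => //; by lia.
move=> h' /orP[h''|h'']; split => //; by lia.
Qed.

Definition Sset := [set b in N | (b != root b) && (cnt b %% 3 == J (root b))].

Lemma S_nr b : b \in Sset -> nr b.
Proof. by rewrite inE => /andP[bN /andP[br _]]; rewrite /nr bN br. Qed.

Lemma S_mod b c : b \in Sset -> c \in Sset -> root b = root c -> cnt b %% 3 = cnt c %% 3.
Proof.
rewrite !inE => /andP[_ /andP[_ /eqP hb]] /andP[_ /andP[_ /eqP hc]] r.
by rewrite hb hc r.
Qed.

Lemma count_root r0 : r0 \in [set root b | b in N] ->
  #|[set b | (b \in N) && (root b == r0)]| <= 4 * #|[set b | (b \in Sset) && (root b == r0)]|.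
Proof.
case/imsetP => b0 b0N ->; set r := root b0.
have b0Z := N_notZ b0N.
have rZ : r \notin Z := root_notZ b0Z.
have rr : root r = r by rewrite /r root_root.
set A := [set b | (b \in N) && (root b == r)].
have eA : A = component e Z r :&: N.
  apply/setP => b; rewrite !inE -!inN; apply/idP/idP.
    move=> /andP[bN /eqP rb]; rewrite bN andbT (N_notZ bN) /=.
    by rewrite connectRsym -rb root_conn // N_notZ.
  move=> /andP[/andP[bZ crb] bN]; rewrite bN /=.
  by rewrite (root_eq rZ crb) rr.
have A2 : 2 <= #|A| by rewrite eA; apply: Hcomp.
have eS : [set b | (b \in Sset) && (root b == r)] = cls r (J r).
  apply/setP => b; rewrite !inE -?inN.
  case: (b \in N) => //=; case: (eqVneq (root b) r) => [->|] /=; by rewrite ?andbT ?andbF.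
rewrite eS.
have rA : r \in A by rewrite inE (rootN b0Z) rr eqxx.
have sub : A :\ r \subset cls r 0 :|: cls r 1 :|: cls r 2.
  apply/subsetP => b; rewrite !inE -?inN => /andP[br /andP[bN rb]].
  rewrite bN rb br /=.
  have : cnt b %% 3 < 3 by rewrite ltn_mod.
  by case: (cnt b %% 3) => [|[|[|n]]].
have c1 := subset_leq_card sub.
have c2 := (leq_card_setU (cls r 0 :|: cls r 1) (cls r 2)).1.
have c3 := (leq_card_setU (cls r 0) (cls r 1)).1.
have cA := cardsD1 r A; rewrite rA add1n in cA.
case: (J_max r) => m0 m1 m2.
lia.
Qed.

Lemma count_N : #|N| <= 4 * #|Sset|.
Proof.
pose Q := [pred r | r \in [set root b | b in N]].
have eN : #|N| = \sum_(r | Q r) #|[set b | (b \in N) && (root b == r)]|.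
  rewrite -sum1_card (@partition_big _ _ _ _ _ _ _ root Q) /=; last first.
    by move=> b bN; rewrite /Q /=; apply/imsetP; exists b.
  apply: eq_bigr => r _; by rewrite sum1dep_card.
have eS : #|Sset| = \sum_(r | Q r) #|[set b | (b \in Sset) && (root b == r)]|.
  rewrite -sum1_card (@partition_big _ _ _ _ _ _ _ root Q) /=; last first.
    move=> b; rewrite inE => /andP[bN _]; rewrite /Q /=; apply/imsetP; by exists b.
  apply: eq_bigr => r _; by rewrite sum1dep_card.
rewrite eN eS big_distrr /=; apply: leq_sum => r; exact: count_root.
Qed.



Lemma Ptr_path b : nr b -> path e b (seg (next b)).
Proof.
move=> nrb; case: (nr_next nrb) => Rn _ nZ _.
case: (seg_props nZ) => [[P1 _ _ _] _].
case: (seg_head (next b)) => q sq; rewrite sq in P1 *.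
by rewrite /= (R_e Rn) (sub_path (@R_e) P1).
Qed.

Definition Et := {b : T | b \in Sset}.
Definition ends (b : Et) := (foot (par (val b)), foot (val b)).
Definition endp (b : Et) z := if foot (val b) == z then val b else par (val b).

Lemma Et_nr (b : Et) : nr (val b).
Proof. exact: S_nr (valP b). Qed.

Lemma mjoins_spec (b : Et) u v : mjoins ends b u v ->
  [/\ u \in Z, v \in Z, u != v, foot (par (val b)) \in [:: u; v] & foot (val b) \in [:: u; v]].
Proof.
have nrb := Et_nr b; have bN : val b \in N by case/andP: nrb.
have pN := parN nrb; have nq := foot_par_neq nrb.
rewrite /mjoins /ends => /orP[]/eqP[<- <-]; rewrite !footZ //;
  rewrite !inE !eqxx ?orbT; split => //; by rewrite eq_sym.
Qed.

Lemma endp_spec (b : Et) u v : mjoins ends b u v ->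
  [/\ endp b u \in Ptr (val b), endp b u \in N, foot (endp b u) = u & e (endp b u) u].
Proof.
have nrb := Et_nr b; have bN : val b \in N by case/andP: nrb.
have pN := parN nrb; have nq := foot_par_neq nrb.
rewrite /mjoins /ends /endp => /orP[]/eqP[h1 h2].
  have -> : (foot (val b) == u) = false by rewrite -h1 (negbTE nq).
  by rewrite par_in // pN h1; split => //; rewrite -h1 foot_e.
rewrite h2 eqxx b_in bN; split => //; by rewrite -h2 foot_e.
Qed.

Lemma endp_sym (b : Et) u v : mjoins ends b u v ->
  (endp b u = val b /\ endp b v = par (val b)) \/ (endp b u = par (val b) /\ endp b v = val b).
Proof.
have nrb := Et_nr b; have nq := foot_par_neq nrb.
rewrite /mjoins /ends /endp => /orP[]/eqP[h1 h2].
  right; rewrite -h2 eqxx; split => //; rewrite -h1 (negbTE nq) //.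
left; rewrite -h1 -h2 eqxx (negbTE nq); by split.
Qed.

Lemma endp_child (b : Et) u v : mjoins ends b u v -> cnt (endp b v) <= cnt (endp b u) ->
  endp b u = val b /\ endp b v = par (val b).
Proof.
move=> j; have cp := cnt_par (Et_nr b).
case: (endp_sym j) => [//|[-> ->]]; rewrite cp; lia.
Qed.

Lemma mcycle_Z c : mcycle ends c -> {subset c <= Z}.
Proof.
case: c => [|u [|v [|w q]]] //=.
- move=> /andP[_ /existsP[b /eqP E0]] x; rewrite inE => /eqP ->.
  have := footZ (parN (Et_nr b)); by rewrite /ends in E0; case: E0 => ->.
- move=> /andP[_ /existsP[f1 /existsP[f2 /andP[/andP[_ j] _]]]] x.
  case: (mjoins_spec j) => uZ vZ _ _ _; rewrite !inE => /orP[]/eqP->//.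
move=> /andP[_ cyc] x xc.
have := next_cycle cyc xc => /existsP[b j]; by case: (mjoins_spec j).
Qed.

Definition U (c : seq T) : {set T} := [set v | (v \in c) ||
  [exists b : Et, (foot (par (val b)) \in c) && (foot (val b) \in c) && (v \in Ptr (val b))]].

Lemma U_Ptr c (b : Et) u v x : mjoins ends b u v -> u \in c -> v \in c -> x \in Ptr (val b) -> x \in U c.
Proof.
move=> j uc vc xb; rewrite inE; apply/orP; right; apply/existsP; exists b.
case: (mjoins_spec j) => _ _ _ h1 h2; rewrite xb andbT.
by move: h1 h2; rewrite !inE => /orP[]/eqP-> /orP[]/eqP->; rewrite ?uc ?vc.
Qed.

Lemma anti_cP (c c' : seq T) (x y : T) : {subset c <= Z} -> {subset c' <= Z} -> [disjoint c & c'] ->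
  x \in c -> y \in U c' -> (x != y) && ~~ e x y.
Proof.
move=> cZ c'Z dj xc; rewrite inE => /orP[yc'|/existsP[b /andP[/andP[f1 f2] yb]]].
  have xy : x != y by apply/eqP => exy; move: dj; rewrite disjoint_has; apply/negP/negPn/hasP; exists x; rewrite // exy.
  by rewrite xy /=; apply: Hstab; [exact: cZ | exact: c'Z].
have xZ := cZ _ xc.
case: (Ptr_mem (Et_nr b) yb) => yZ _ yN _ _.
have xy : x != y by apply/eqP => exy; move: yZ; rewrite -exy xZ.
rewrite xy /=; apply/negP => exy.
have yN' : y \in N by apply: (N_of yZ xZ); rewrite esym.
have fy : x = foot y by apply: foot_uniq => //; rewrite esym.
have : x \in c' by rewrite fy; case: (yN yN') => ->.
move=> xc'; move: dj; rewrite disjoint_has => /hasP; apply; by exists x.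
Qed.

Lemma anti_U (c c' : seq T) (x y : T) : {subset c <= Z} -> {subset c' <= Z} -> [disjoint c & c'] ->
  x \in U c -> y \in U c' -> (x != y) && ~~ e x y.
Proof.
move=> cZ c'Z dj; rewrite inE => /orP[xc|/existsP[b /andP[/andP[f1 f2] xb]]] yU.
  exact: anti_cP dj xc yU.
move: yU; rewrite inE => /orP[yc'|/existsP[b' /andP[/andP[f1' f2'] yb']]].
  have dj' : [disjoint c' & c] by rewrite disjoint_sym.
  have xU : x \in U c by rewrite inE; apply/orP; right; apply/existsP; exists b; rewrite f1 f2 xb.
  have := anti_cP c'Z cZ dj' yc' xU; by rewrite eq_sym esym.
apply: (anti (Et_nr b) (Et_nr b')) => //.
  move=> u v; rewrite !inE => hu hv; apply/eqP => fuv.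
  have fu : foot u \in c by case/orP: hu => /eqP->.
  have fv : foot v \in c' by case/orP: hv => /eqP->.
  move: dj; rewrite disjoint_has => /hasP; apply; exists (foot u) => //; by rewrite fuv.
apply: S_mod; exact: valP.
Qed.



Local Notation cnext := path.next.
Local Notation cprev := path.prev.

Lemma cyc_split (r : rel T) (c : seq T) y : uniq c -> cycle r c -> 2 < size c -> y \in c ->
  exists q, [/\ path r (cnext c y) q, last (cnext c y) q = cprev c y, cnext c y != cprev c y &
    {subset cnext c y :: q <= [pred w | (w \in c) && (w != y)]}].
Proof.
move=> uc cc sc yc; case: (rot_to yc) => i q E.
have uq : uniq (y :: q) by rewrite -E rot_uniq.
have cq : cycle r (y :: q) by rewrite -E rot_cycle.
have sq : size q = (size c).-1 by rewrite -(size_rot i c) E.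
rewrite -(next_rot i uc y) -(prev_rot i uc y) E.
case: q E uq cq sq => [|n1 q'] E uq cq sq; first by move: sc; rewrite -(size_rot i) E.
have -> : cnext (y :: n1 :: q') y = n1 by rewrite next_nth inE eqxx /= eqxx.
have -> : cprev (y :: n1 :: q') y = last n1 q'.
  rewrite prev_nth mem_head.
  move: uq; rewrite cons_uniq => /andP[yq _].
  change (nth y (y :: n1 :: q') (index y (n1 :: q')) = last n1 q').
  rewrite (memNindex yq); exact: (nth_last y (y :: n1 :: q')).
exists q'; split.
- by move: cq; rewrite /cycle /= rcons_path => /andP[_ /andP[-> _]].
- by [].
- move: uq sc; rewrite -(size_rot i) E.
  case: q' {E cq sq} => [|a q'] //= /andP[_ /andP[nq _]] _.
  apply/eqP => nl; rewrite nl in nq.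
  by rewrite mem_last in nq.
- move=> w wq; rewrite inE /=; apply/andP; split.
    by rewrite -(mem_rot i) E inE wq orbT.
  apply/eqP => wy; move: uq; rewrite cons_uniq => /andP[]; by rewrite -wy wq.
Qed.

Section Real.
Variable c : seq T.
Hypothesis cZ : {subset c <= Z}.
Variable z : T.
Hypothesis zc : z \in c.

Definition W := [set w in U c | w != z].
Definition eW : rel T := [rel x y | e x y && (x \in W) && (y \in W)].

Lemma eW_sym : symmetric eW.
Proof. by move=> x y; rewrite /eW /= esym andbAC. Qed.

Lemma eW_csym : connect_sym eW.
Proof. exact: sym_connect_sym eW_sym. Qed.

Lemma UW x : x \in U c -> x \notin Z -> x \in W.
Proof.
move=> xU xZ; rewrite inE xU /=; apply/eqP => xz; by rewrite xz cZ in xZ.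
Qed.

Lemma cW y : y \in c -> y != z -> y \in W.
Proof. by move=> yc yz; rewrite inE yz andbT inE yc. Qed.

Lemma path_eW x p : path e x p -> x \in W -> all (mem W) p -> path eW x p.
Proof.
elim: p x => [|y p IH] x //= /andP[exy pp] xW /andP[yW pW].
by rewrite /eW /= exy xW yW (IH _ pp yW pW).
Qed.

Lemma R1 (b : Et) u v x y : mjoins ends b u v -> u \in c -> v \in c ->
  x \in Ptr (val b) -> y \in Ptr (val b) -> connect eW x y.
Proof.
move=> j uc vc xb yb.
have nrb := Et_nr b.
have PW : forall w, w \in Ptr (val b) -> w \in W.
  move=> w wb; apply: UW; first exact: U_Ptr j uc vc wb.
  by case: (Ptr_mem nrb wb).
have pp : path eW (val b) (seg (next (val b))).
  apply: path_eW; first exact: Ptr_path.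
    by apply: PW; exact: b_in.
  apply/allP => w ws; apply: PW; by rewrite inE ws orbT.
have cx := path_connect pp xb; have cy := path_connect pp yb.
by apply: connect_trans cy; rewrite eW_csym.
Qed.

Lemma R3 a y : a \in N -> a \in U c -> foot a = y -> y \in c -> y != z -> connect eW a y.
Proof.
move=> aN aU fa yc yz; apply: connect1; rewrite /eW /= -fa foot_e // UW //; last exact: N_notZ.
by rewrite fa cW.
Qed.

Lemma R4 y y' : y \in c -> y' \in c -> y != z -> y' != z -> madj ends y y' -> connect eW y y'.
Proof.
move=> yc y'c yz y'z /existsP[b j].
have j' : mjoins ends b y' y by rewrite mjoins_sym.
case: (endp_spec j) => ab aN fa _.
case: (endp_spec j') => ab' aN' fa' _.
have aU := U_Ptr j yc y'c ab; have aU' := U_Ptr j yc y'c ab'.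
apply: (@connect_trans _ _ (endp b y)).
  rewrite eW_csym; exact: R3.
apply: connect_trans (R1 j yc y'c ab ab') _; exact: R3.
Qed.

Lemma R5 y0 q : path (madj ends) y0 q -> all [pred w | (w \in c) && (w != z)] (y0 :: q) ->
  connect eW y0 (last y0 q).
Proof.
elim: q y0 => [|y q IH] y0 /=; first by rewrite connect0.
move=> /andP[m pp] /and3P[/andP[y0c y0z] /andP[yc yz] aq].
apply: connect_trans (R4 y0c yc y0z yz m) _.
apply: IH => //=; by rewrite yc yz.
Qed.

Lemma R6 (b1 b2 : Et) w1 w2 : mjoins ends b1 z w1 -> mjoins ends b2 z w2 ->
  w1 \in c -> w2 \in c -> w1 != z -> w2 != z -> endp b1 z != endp b2 z ->
  connect eW w1 w2 -> exists g, gcycle e g && all (fun v => v \in U c) g.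
Proof.
move=> j1 j2 w1c w2c w1z w2z ne cw.
have j1' : mjoins ends b1 w1 z by rewrite mjoins_sym.
have j2' : mjoins ends b2 w2 z by rewrite mjoins_sym.
case: (endp_spec j1) => a1b a1N fa1 ea1.
case: (endp_spec j2) => a2b a2N fa2 ea2.
case: (endp_spec j1') => c1b c1N fc1 _.
case: (endp_spec j2') => c2b c2N fc2 _.
set a1 := endp b1 z in a1b a1N fa1 ea1 ne *.
set a2 := endp b2 z in a2b a2N fa2 ea2 ne *.
have a1U := U_Ptr j1 zc w1c a1b.
have a2U := U_Ptr j2 zc w2c a2b.
have c1U := U_Ptr j1 zc w1c c1b.
have c2U := U_Ptr j2 zc w2c c2b.
have ca : connect eW a1 a2.
  apply: connect_trans (R1 j1 zc w1c a1b c1b) _.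
  apply: connect_trans (R3 c1N c1U fc1 w1c w1z) _.
  apply: connect_trans cw _.
  apply: connect_trans _ (R1 j2 zc w2c c2b a2b).
  rewrite eW_csym; exact: R3.
case/connectP: ca => p pp lp.
pose R' := [rel x y | eW x y || (x == a2) && (y == z)].
have zZ := cZ zc.
have a1Z := N_notZ a1N.
case: (@GL T e esym R' a1 z (rcons p z)).
- by move=> x y /orP[/andP[/andP[]]//|/andP[/eqP-> /eqP->]]; rewrite -fa2 foot_e.
- by apply/eqP => az; rewrite az zZ in a1Z.
- by [].
- rewrite /R' /= negb_or negb_and ne /= andbT.
  by rewrite /eW /= !inE eqxx !andbF.
- rewrite rcons_path -lp /= !eqxx orbT andbT.
  by apply: sub_path pp => x y h; rewrite /R' /= h.
- by rewrite last_rcons.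
move=> g gg sg; exists g; rewrite gg /=; apply/allP => x /sg.
rewrite inE => /orP[/eqP->//|]; rewrite mem_rcons inE => /orP[/eqP->|xp].
  by rewrite inE zc.
have tW : forall u v, eW u v -> (fun w => w \in W) v.
  by move=> u' v'; rewrite /eW /=; case/andP.
have := path_tgt tW pp => /allP /(_ _ xp).
by rewrite inE => /andP[].
Qed.

End Real.

Lemma endp_eq (f1 f2 : Et) u v : mjoins ends f1 u v -> mjoins ends f2 u v ->
  endp f1 u = endp f2 u -> endp f1 v = endp f2 v -> f1 = f2.
Proof.
move=> j1 j2 eu ev; apply: val_inj.
have c1 := cnt_par (Et_nr f1); have c2 := cnt_par (Et_nr f2).
case: (endp_sym j1) => [[h1 h1']|[h1 h1']]; case: (endp_sym j2) => [[h2 h2']|[h2 h2']].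
- by rewrite -h1 -h2.
- have e1 : val f1 = par (val f2) by rewrite -h1 eu h2.
  have e2 : par (val f1) = val f2 by rewrite -h1' ev h2'.
  by move: c1 c2; rewrite e2 e1; lia.
- have e1 : par (val f1) = val f2 by rewrite -h1 eu h2.
  have e2 : val f1 = par (val f2) by rewrite -h1' ev h2'.
  by move: c1 c2; rewrite e1 e2; lia.
- by rewrite -h1' -h2'.
Qed.

Lemma realize c : mcycle ends c -> exists g, gcycle e g && all (fun v => v \in U c) g.
Proof.
move=> mc; have cZ := mcycle_Z mc.
case: c mc cZ => [|u [|v [|w q]]] //.
- move=> /andP[_ /existsP[b /eqP E0]]; have := foot_par_neq (Et_nr b).
  by rewrite /ends in E0; case: E0 => -> ->; rewrite eqxx.
- move=> /andP[uv /existsP[f1 /existsP[f2 /andP[/andP[f12 j1] j2]]]] cZ.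
  rewrite /= inE andbT in uv.
  have uc : u \in [:: u; v] by rewrite !inE eqxx.
  have vc : v \in [:: u; v] by rewrite !inE eqxx orbT.
  case: (eqVneq (endp f1 u) (endp f2 u)) => [eu|neu].
    case: (eqVneq (endp f1 v) (endp f2 v)) => [ev|nev].
      by rewrite (endp_eq j1 j2 eu ev) eqxx in f12.
    have j1' : mjoins ends f1 v u by rewrite mjoins_sym.
    have j2' : mjoins ends f2 v u by rewrite mjoins_sym.
    apply: (R6 cZ vc j1' j2' uc uc _ _ nev) => //; by rewrite eq_sym.
  apply: (R6 cZ uc j1 j2 vc vc _ _ neu) => //; by rewrite eq_sym.
set c := [:: u, v, w & q] => mc cZ.
case/andP: mc => uc cc.
have sc : 2 < size c by [].
have um : u \in c by rewrite inE eqxx.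
have [b0 _] : exists b : Et, True.
  case/existsP: (next_cycle cc um) => b _; by exists b.
pose edge y y' := odflt b0 [pick b : Et | mjoins ends b y y'].
have edgeP : forall y y', madj ends y y' -> mjoins ends (edge y y') y y'.
  move=> y y' /existsP[b j]; rewrite /edge; case: pickP => [b' //|/(_ b)]; by rewrite j.
have jn : forall y, y \in c -> mjoins ends (edge y (cnext c y)) y (cnext c y).
  move=> y yc; apply: edgeP; exact: next_cycle.
have jp : forall y, y \in c -> mjoins ends (edge (cprev c y) y) y (cprev c y).
  move=> y yc; rewrite mjoins_sym; apply: edgeP; exact: prev_cycle.
pose A y := endp (edge y (cnext c y)) y.
pose B y := endp (edge (cprev c y) y) y.
case: (boolP [exists y in c, A y != B y]) => [/existsP[y /andP[yc ne]]|/existsPn allEq].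
  case: (cyc_split uc cc sc yc) => q' [pq lq npq sub].
  have nc : cnext c y \in c by rewrite mem_next.
  have pc : cprev c y \in c by rewrite mem_prev.
  have nz : cnext c y != y by move: (sub _ (mem_head _ _)) => /andP[].
  have pz : cprev c y != y.
    have : cprev c y \in cnext c y :: q' by rewrite -lq mem_last.
    by move/sub => /andP[].
  apply: (R6 cZ yc (jn _ yc) (jp _ yc) nc pc nz pz ne).
  rewrite -lq; apply: R5 => //.
  apply/allP => x /sub; by rewrite inE.
have hAB : forall y, y \in c -> A y = B y.
  by move=> y yc; have := allEq y; rewrite yc /= negbK => /eqP.
case: (@arg_maxnP T u (fun y => y \in c) (fun y => cnt (A y)) um) => zs zsc zmax.
set n := cnext c zs; set p := cprev c zs.
have nc : n \in c by rewrite mem_next.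
have pc : p \in c by rewrite mem_prev.
set b' := edge zs n.
have j' : mjoins ends b' zs n by exact: jn.
have bn : endp b' n = A n.
  rewrite (hAB _ nc) /B /n prev_next //.
have [h1 h2] : endp b' zs = val b' /\ endp b' n = par (val b').
  apply: endp_child j' _; rewrite bn; exact: zmax.
set b := edge p zs.
have j : mjoins ends b zs p by rewrite /b /p; exact: jp.
have bz : endp b zs = A zs by rewrite (hAB _ zsc).
have bp : endp b p = A p by rewrite /A /p next_prev.
have [h3 h4] : endp b zs = val b /\ endp b p = par (val b).
  apply: endp_child j _; rewrite bp bz; exact: zmax.
have vb : val b = val b' by rewrite -h3 bz -h1.
have Anp : A n = A p by rewrite -bn -bp h2 h4 vb.
have j'' : mjoins ends b' n zs by rewrite mjoins_sym.
have jb : mjoins ends b p zs by rewrite mjoins_sym.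
case: (endp_spec j'') => _ _ fn _.
case: (endp_spec jb) => _ _ fp _.
have : n = p by rewrite -fn -fp bn bp Anp.
case: (cyc_split uc cc sc zsc) => q' [_ _ npq _].
by move/eqP; rewrite (negbTE npq).
Qed.



Lemma card_part (I J : finType) (f : I -> J) (A : {set I}) (B : {set J}) :
  (forall i, i \in A -> f i \in B) ->
  #|A| = \sum_(j in B) #|[set i in A | f i == j]|.
Proof.
move=> H; rewrite -sum1_card (@partition_big _ _ _ _ _ _ _ f (mem B)) //=.
apply: eq_bigr => j _; by rewrite sum1dep_card.
Qed.

Lemma noPack s : sO_free e s ->
  ~ (exists cs : 'I_s -> seq T,
        (forall i, mcycle ends (cs i)) /\ (forall i j, i <> j -> [disjoint cs i & cs j])).
Proof.
move=> Hf [cs [Hc Hd]]; apply: Hf.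
pose g i := xchoose (realize (Hc i)).
have gP : forall i, gcycle e (g i) && all (fun v => v \in U (cs i)) (g i).
  move=> i; exact: (xchooseP (realize (Hc i))).
exists g; split.
  by move=> i; case/andP: (gP i).
move=> i j ij x y xg yg.
have xU : x \in U (cs i) by case/andP: (gP i) => _ /allP; apply.
have yU : y \in U (cs j) by case/andP: (gP j) => _ /allP; apply.
have := anti_U (mcycle_Z (Hc i)) (mcycle_Z (Hc j)) (Hd i j ij) xU yU.
by case/andP => /eqP xy ->.
Qed.

Lemma zip_mem (s t : seq T) xy : xy \in zip s t -> (xy.1 \in s) && (xy.2 \in t).
Proof.
elim: s t => [|a s IH] [|b t] //=; rewrite inE => /orP[/eqP->|/IH /andP[h1 h2]].
  by rewrite !inE !eqxx.
by rewrite !inE h1 h2 !orbT.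
Qed.

Lemma pe_first b : nr b -> [set b; next b] \in path_edges (Ptr b).
Proof.
move=> nrb; rewrite /path_edges /Ptr inE.
case: (seg_head (next b)) => q ->; by rewrite /= inE eqxx.
Qed.

Lemma pe_mem (b : T) (E' : {set T}) (u : T) : E' \in path_edges (Ptr b) -> u \in E' -> u \in Ptr b.
Proof.
rewrite /path_edges inE => /mapP[xy /zip_mem /andP[h1 h2] ->].
rewrite in_set2 => /orP[/eqP->//|/eqP->]; exact: mem_behead.
Qed.

Lemma pe_inj (b1 b2 : Et) : path_edges (Ptr (val b1)) = path_edges (Ptr (val b2)) -> b1 = b2.
Proof.
move=> he; apply: val_inj.
have n1 := Et_nr b1; have n2 := Et_nr b2.
have x1 : val b1 \in Ptr (val b2).
  apply: (@pe_mem _ [set val b1; next (val b1)]); last by rewrite !inE eqxx.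
  by rewrite -he pe_first.
have x2 : val b2 \in Ptr (val b1).
  apply: (@pe_mem _ [set val b2; next (val b2)]); last by rewrite !inE eqxx.
  by rewrite he pe_first.
have N1 : val b1 \in N by case/andP: n1.
have N2 : val b2 \in N by case/andP: n2.
case: (Ptr_mem n2 x1) => _ _ /(_ N1) [//|h1] _ _.
case: (Ptr_mem n1 x2) => _ _ /(_ N2) [//|h2] _ _.
have c1 := cnt_par n1; have c2 := cnt_par n2.
by move: c1 c2; rewrite -h1 -h2; lia.
Qed.

Lemma mult_le (x z : T) :
  #|[set b : Et | [set foot (par (val b)); foot (val b)] == [set x; z]]| <= multiplicity e Z x z.
Proof.
set B := [set b : Et | _].
rewrite -(@card_in_imset _ _ (fun b : Et => path_edges (Ptr (val b)))); last first.
  by move=> b1 b2 _ _; exact: pe_inj.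
apply: subset_leq_card; apply/subsetP => S /imsetP[b bB ->].
rewrite inE; apply/asboolP; exists (Ptr (val b)); split => //.
  exact: Ptr_trans (Et_nr b).
rewrite Ptr_feet; last exact: Et_nr.
by move: bB; rewrite inE setUC => /eqP.
Qed.

Lemma mult_k x z : x \in Z -> z \in Z -> multiplicity e Z x z <= thickness e Z.
Proof.
move=> xZ zZ; rewrite /thickness.
apply: (@leq_bigmax_cond _ (fun zz : T * T => (zz.1 \in Z) && (zz.2 \in Z))
  (fun zz => multiplicity e Z zz.1 zz.2) (x, z)); by rewrite /= xZ zZ.
Qed.

Lemma Bx_le x : #|[set b : Et | x \in [set foot (par (val b)); foot (val b)]]| <= #|Z| * thickness e Z.
Proof.
set Bx := [set b : Et | _].
have fZ : forall b : Et, (foot (par (val b)) \in Z) && (foot (val b) \in Z).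
  move=> b; have nrb := Et_nr b; have pN := parN nrb.
  have bN : val b \in N by case/andP: nrb.
  by rewrite !footZ.
case: (boolP (x \in Z)) => xZ; last first.
  have -> : Bx = set0.
    apply/setP => b; rewrite !inE; case/andP: (fZ b) => h1 h2.
    by apply/negP => /orP[]/eqP ex; move: xZ; rewrite ex ?h1 ?h2.
  by rewrite cards0.
pose oth (b : Et) := if foot (par (val b)) == x then foot (val b) else foot (par (val b)).
rewrite (@card_part _ _ oth Bx Z); last first.
  move=> b _; rewrite /oth; case/andP: (fZ b) => h1 h2; by case: ifP.
rewrite -sum_nat_const; apply: leq_sum => z zZ.
apply: leq_trans (mult_k xZ zZ); apply: leq_trans (mult_le x z).
apply: subset_leq_card; apply/subsetP => b; rewrite !inE => /andP[hx /eqP oz].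
apply/eqP; case: (eqVneq (foot (par (val b))) x) => [fpx|fpx].
  by rewrite /oth fpx eqxx in oz; rewrite fpx oz.
rewrite /oth (negbTE fpx) in oz.
have xb : x = foot (val b).
  by case/orP: hx => /eqP // ex; rewrite ex eqxx in fpx.
by rewrite oz xb setUC.
Qed.

Lemma main_bound (s phi : nat) : erdos_posa_bound s phi -> sO_free e s ->
  #|N| <= 4 * (thickness e Z * phi + 1) * #|Z|.
Proof.
move=> EP Hf.
case: (EP T Et ends (noPack Hf)) => X [cX hX].
set k := thickness e Z.
have fZ : forall b : Et, (foot (par (val b)) \in Z) && (foot (val b) \in Z).
  move=> b; have nrb := Et_nr b; have pN := parN nrb.
  have bN : val b \in N by case/andP: nrb.
  by rewrite !footZ.
set A := [set b : Et | (foot (par (val b)) \notin X) && (foot (val b) \notin X)].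
have cA : #|A| <= #|Z|.
  apply: leq_trans (@forest_count _ _ ends (Z :\: X) A _ _) _.
  - move=> b; rewrite inE /ends /= => /andP[h1 h2]; case/andP: (fZ b) => g1 g2.
    by rewrite !inE h1 h2 g1 g2.
  - move=> c mc sc; case: (hX c mc) => x xX xc.
    by have := sc _ xc; rewrite inE xX.
  - by apply: subset_leq_card; exact: subsetDl.
pose g (b : Et) := if foot (par (val b)) \in X then foot (par (val b)) else foot (val b).
have cC : #|~: A| <= #|X| * (#|Z| * k).
  rewrite (@card_part _ _ g (~: A) X); last first.
    move=> b; rewrite !inE negb_and !negbK /g; by case: ifP.
  rewrite -sum_nat_const; apply: leq_sum => x xX.
  apply: leq_trans (Bx_le x); apply: subset_leq_card; apply/subsetP => b.
  rewrite !inE /g => /andP[_]; case: ifP => _ /eqP->; by rewrite eqxx ?orbT.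
have cE : #|Sset| = #|A| + #|~: A|.
  rewrite cardsC /Et card_sig; apply: eq_card => b; by rewrite !inE.
have cN := count_N.
have cXp : #|X| * (#|Z| * k) <= phi * (#|Z| * k) by rewrite leq_mul2r cX orbT.
nia.
Qed.

End Main.

Theorem mainTheorem13 (s : nat) (phi : nat) (T : finType) (e : rel T)
    (Z : {set T}) (k : nat) :
  1 <= s ->
  erdos_posa_bound s phi ->
  plantation e s Z ->
  monic e Z ->
  selfless e Z ->
  thickness e Z = k ->
  (forall v, v \notin Z -> 2 <= #|component e Z v :&: Nset e Z|) ->
  #|Nset e Z| <= 4 * (k * phi + 1) * #|Z|.
Proof.
move=> _ EP [[esym eirr] [Hf Hhit]] [Hstab Hmon] Hself <- Hcomp.
exact: (main_bound esym eirr Hhit Hstab Hmon Hself Hcomp EP Hf).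
Qed.
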